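(* Let $S$ be a numerical semigroup and $G=G(S)=(V,E)$ its associated graph. Let $v_1\ne v_2\in V$ and suppose $v_2-v_1\in S$. Then $\deg(v_1)>\deg(v_2)$.
   Context: A numerical semigroup is a subset $S\subseteq\mathbb N$ containing $0$, closed under addition, with finite complement; $S^*=S\setminus\{0\}$, $m=\min S^*$, $X=\{s\in S^*: s-m\notin S\}$. The graph $G(S)$ has edge set all subsets $\{x,y\}\subseteq X$ ($x=y$ allowed) with $x+y\in X$, and vertex set $V$ the endvertices of these edges. For $x\in V$, $N_G(x)=\{y\in X: x+y\in X\}$ (which contains $x$ if $2x\in X$) and $\deg(x)=|N_G(x)|$. *)

(* Defs.v *)
From mathcomp Require Import all_boot.
Set Implicit Arguments. Unset Strict Implicit. Unset Printing Implicit Defensive.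

(* S is a numerical semigroup: 0 in S, closed under +, finite complement
   (witnessed by a bound c such that every n >= c lies in S). *)
Definition numerical_semigroup (S : pred nat) : Prop :=
  S 0 /\ (forall x y, S x -> S y -> S (x + y)) /\
  exists c, forall n, c <= n -> S n.

Definition is_multiplicity (S : pred nat) (m : nat) : Prop :=
  [/\ 0 < m, S m & forall s, S s -> 0 < s -> m <= s].

(* X = { s in S^* : s - m notin S } (s - m < 0 counts as "not in S";
   for s in S^*, s >= m, so truncated subtraction agrees except s = m,
   where both readings give m notin X). *)
Definition inX (S : pred nat) (m s : nat) : bool :=
  [&& S s, 0 < s & ~~ S (s - m)].

(* Vertex set V of G(S): endvertices of edges {x,y} subset X with x+y in X. *)
Definition inV (S : pred nat) (m x : nat) : Prop :=
  inX S m x /\ exists y, inX S m y && inX S m (x + y).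

Definition nbhd (S : pred nat) (m x : nat) : pred nat :=
  fun y => inX S m y && inX S m (x + y).

(* Every element of X is < c + m whenever all n >= c lie
   in S (if s in X then s - m notin S, so s - m < c), hence counting over
   [0, c + m) counts all of N_G(x); the value does not depend on the
   admissible bound c chosen. *)
Definition deg (S : pred nat) (m c x : nat) : nat :=
  count (nbhd S m x) (iota 0 (c + m)).

(* Main.v *)
Require Import Defs.
From mathcomp Require Import all_boot.
From mathcomp Require Import zify.

Lemma count_shift (p q : pred nat) (N d : nat) :
  (forall z, q z -> z < N) -> (forall y, p y -> q (y + d)) -> q d -> ~~ p 0 ->
  count p (iota 0 N) < count q (iota 0 N).
Proof.
move=> qN pq qd np0.
have dN := qN _ qd.
have E : N = (N - d) + d by lia.
have cp : count p (iota 0 N) = count p (iota 0 (N - d)).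
  rewrite E iotaD count_cat.
  have -> : count p (iota (0 + (N - d)) d) = 0.
    apply/eqP; rewrite eqn0Ngt -has_count; apply/hasPn => z.
    rewrite mem_iota => /andP [h1 h2]; apply/negP => /pq /qN; lia.
  by rewrite addn0 -E.
have cq : count q (iota 0 N) = count q (iota 0 d) + count (fun y => q (y + d)) (iota 0 (N - d)).
  rewrite {1}(_ : N = d + (N - d)) ?iotaD; last lia.
  rewrite count_cat add0n; congr (_ + _).
  rewrite -[X in iota X _](addn0 d) iotaDl count_map /=.
  by apply: eq_count => y /=; rewrite addnC.
rewrite cp cq.
have Nd : 0 < N - d by lia.
have h : count (predU p (pred1 0)) (iota 0 (N - d)) <= count (fun y => q (y + d)) (iota 0 (N - d)).
  apply: sub_count => y /= /orP [/pq //| /eqP ->]; by rewrite add0n.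
have h3 := count_predUI p (pred1 0) (iota 0 (N - d)).
have h1 : count (pred1 0) (iota 0 (N - d)) = 1.
  rewrite -(subnK Nd) -addn1 addnC iotaD count_cat /=.
  have -> : count (pred1 0) (iota 1 (N - d - 1)) = 0.
    apply/eqP; rewrite eqn0Ngt -has_count; apply/hasPn => z.
    rewrite mem_iota /=; apply: contraTN => /eqP ->; by [].
  by [].
have h2 : count (predI p (pred1 0)) (iota 0 (N - d)) = 0.
  apply/eqP; rewrite eqn0Ngt -has_count; apply/hasPn => z _ /=.
  by apply/negP => /andP [pz /eqP z0]; move: pz; rewrite z0 (negbTE np0).
apply: leq_trans (leq_addl _ _); apply: leq_trans h.
by move: h3; rewrite h2 h1 addn0 addn1 => ->.
Qed.

Theorem proposition4p7 (S : pred nat) (m c v1 v2 : nat) :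
  numerical_semigroup S ->
  is_multiplicity S m ->
  (forall n, c <= n -> S n) ->
  inV S m v1 -> inV S m v2 -> v1 <> v2 ->
  v1 <= v2 -> S (v2 - v1) ->
  deg S m c v2 < deg S m c v1.
Proof.
move=> [S0 [Sadd _]] [m0 Sm mmin] Sc [X1 _] [X2 _] ne le Sd.
have Xlt : forall z, inX S m z -> z < c + m.
  move=> z /and3P [Sz z0 nS]; rewrite ltnNge; apply/negP => h.
  by move: nS; rewrite Sc //; lia.
have Xsub : forall a b, S a -> S b -> 0 < a -> inX S m (a + b) -> inX S m a.
  move=> a b Sa Sb a0 /and3P [Sab _ nS]; apply/and3P; split => //.
  apply/negP => Sam; move: nS; have am : m <= a by apply: mmin.
  by rewrite (_ : a + b - m = (a - m) + b); [rewrite Sadd | lia].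
have S1 : S v1 by case/and3P: X1.
have X0 : forall y, inX S m y -> S y /\ 0 < y.
  by move=> y /and3P [].
set d := v2 - v1.
have d0 : 0 < d by rewrite /d; lia.
have E2 : v2 = d + v1 by rewrite /d; lia.
have Xd : inX S m d by apply: (Xsub d v1) => //; rewrite -E2.
rewrite /deg; apply: (@count_shift _ _ _ d).
- by move=> z /andP [/Xlt].
- move=> y /andP [Xy Xv2y]; have [Sy y0] := X0 _ Xy.
  have Xyd : inX S m (y + d).
    apply: (Xsub _ v1) => //; first by apply: Sadd.
    - by lia.
    by rewrite -addnA -E2 addnC.
  apply/andP; split => //.
  by have -> : v1 + (y + d) = v2 + y by lia.
- by apply/andP; split => //; rewrite addnC -E2.
- by rewrite /nbhd /inX /= andbF.
Qed.
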